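(* Let $k,n$ be sufficiently large, let $\Phi$ be a quasirandom $k$-CNF on $x_1,\dots,x_n$ and let $\mathcal M$ be a mist of $\Phi$ satisfying (Q1)–(Q3). Let $\omega=\lceil\exp(n/k^2)\rceil$, consider the run $(\sigma^{[t]})$ of Walksat$(\Phi,\omega)$ and let $\mathcal A$ be the event $\sigma^{[0]}\notin\mathcal D(\Phi,\mathcal M)$. Let $\tau_1\notin T(\Phi)$ and $\mu\in\mathcal M$ be such that $\mathrm{dist}(\tau_1,\mu)=\lfloor10\kappa n\rfloor$. Then for all $1\le t_1\le t_2\le\omega$, $$\Pr\big[H_\mu(t_1,t_2)\,\big|\,\mathcal A,\ \sigma^{[t_1]}=\tau_1\big]\le\exp(-\kappa n/2).$$
   Context: $\Phi=\Phi_1\wedge\dots\wedge\Phi_m$ with clauses $\Phi_i=\Phi_{i1}\vee\dots\vee\Phi_{ik}$; $|\Phi_{ij}|$ is the variable of literal $\Phi_{ij}$. $\rho=2^{-k}m/n$, $\kappa=\ln k/k$. $U_\Phi(\sigma)$ is the set of indices of clauses unsatisfied by $\sigma$, $\mathcal U_\Phi(\sigma)=|U_\Phi(\sigma)|$, $T(\Phi)=\{\tau:\mathcal U_\Phi(\tau)\le n\rho/10\}$. $\mathrm{dist}$ is Hamming distance, $\Delta(\sigma,\tau)$ the set of variables where $\sigma,\tau$ differ, $\mathcal D_\sigma(r_1,r_2)=\{\tau:\lfloor r_1\kappa n\rfloor\le\mathrm{dist}(\sigma,\tau)\le\lfloor r_2\kappa n\rfloor\}$, $X_\Phi(W,\sigma)=\sum_{i\in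 U_\Phi(\sigma)}\sum_{j\in[k]}\mathbf 1\{|\Phi_{ij}|\in W\}$. A mist is $\mathcal M\subseteq T(\Phi)$ with pairwise distances at least $2\kappa n$ such that every $\sigma\in T(\Phi)$ is within distance $2\kappa n$ of some element of $\mathcal M$; $\mathcal D(\Phi,\mathcal M)=\bigcup_{\sigma\in\mathcal M}\mathcal D_\sigma(0,10)$. Conditions: (Q1) $|\mathcal D(\Phi,\mathcal M)|\le2^n\exp(-2n/k^2)$; (Q2) $|\mathcal M\cap\mathcal D_\tau(0,10)|\le k$ for all $\tau$; (Q3) for all $\mu\in\mathcal M$, $\sigma\in\mathcal D_\mu(0,100)\setminus T(\Phi)$: $X_\Phi(\Delta(\mu,\sigma),\sigma)\le k\,\mathcal U_\Phi(\sigma)/10$. $\Phi$ is quasirandom if such a mist exists. Walksat$(\Phi,\omega)$: $\sigma^{[0]}$ uniform; at each step $i\le\omega$, halt if $\sigma^{[i]}$ satisfies $\Phi$, otherwise pick a uniformly random unsatisfied clause and uniformly random position $j\in[k]$ and flip that literal's variable to get $\sigma^{[i+1]}$. $H_\mu(t_1,t_2)$ is the event that $\mathrm{dist}(\sigma^{[t_1]},\mu)=\lfloor10\kappa n\rfloor$, $\mathrm{dist}(\sigma^{[t_2]},\mu)=\lfloor5\kappa n\rfloor$, and $\sigma^{[t]}\in\mathcal D_\mu(5,10)\setminus T(\Phi)$ for all $t_1\le t\le t_2$. *)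

(* Defs.v *)
From mathcomp Require Import all_boot.
From Stdlib Require Import Reals.

Set Implicit Arguments.
Unset Strict Implicit.
Unset Printing Implicit Defensive.

Notation assign n := {ffun 'I_n -> bool}.

(* A k-CNF with m clauses on n variables: clause i, position j gives the
   literal (variable |Phi_ij|, sign); sign true = positive literal. *)
Definition cnf (n m k : nat) := 'I_m -> 'I_k -> ('I_n * bool).

Definition lit_true n (s : assign n) (l : 'I_n * bool) : bool := s l.1 == l.2.

Definition unsat n m k (Phi : cnf n m k) (s : assign n) : {set 'I_m} :=
  [set i | [forall j, ~~ lit_true s (Phi i j)]].

Definition nunsat n m k (Phi : cnf n m k) (s : assign n) : nat := #|unsat Phi s|.

Definition rho (n m k : nat) : R := (INR m / (pow 2 k * INR n))%R.
Definition kappa (k : nat) : R := (ln (INR k) / INR k)%R.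

Definition Tset n m k (Phi : cnf n m k) : {set assign n} :=
  [set t | if Rle_dec (INR (nunsat Phi t)) (INR n * rho n m k / 10)%R then true else false].

(* floor and ceiling of a real number (Int_part is the floor). *)
Definition flo (r : R) : nat := Z.to_nat (Int_part r).
Definition cei (r : R) : nat := Z.to_nat (- Int_part (- r)).

Definition Delta n (s t : assign n) : {set 'I_n} := [set v | s v != t v].
Definition hdist n (s t : assign n) : nat := #|Delta s t|.

Definition Dball n k (s : assign n) (r1 r2 : R) : {set assign n} :=
  [set t | (flo (r1 * kappa k * INR n) <= hdist s t)%N
           && (hdist s t <= flo (r2 * kappa k * INR n))%N].

Definition Xcnt n m k (Phi : cnf n m k) (W : {set 'I_n}) (s : assign n) : nat :=
  \sum_(i in unsat Phi s) #|[set j : 'I_k | (Phi i j).1 \in W]|.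

Definition is_mist n m k (Phi : cnf n m k) (M : {set assign n}) : Prop :=
  [/\ M \subset Tset Phi,
      (forall s t, s \in M -> t \in M -> s != t ->
         (2 * kappa k * INR n <= INR (hdist s t))%R) &
      (forall s, s \in Tset Phi ->
         exists2 mu, mu \in M & (INR (hdist s mu) <= 2 * kappa k * INR n)%R)].

Definition DPM n k (M : {set assign n}) : {set assign n} :=
  \bigcup_(s in M) Dball k s 0%R 10%R.

Definition Q1 n m k (Phi : cnf n m k) (M : {set assign n}) : Prop :=
  (INR #|DPM k M| <= pow 2 n * exp (- (2 * INR n / (INR k * INR k))))%R.

Definition Q2 n k (M : {set assign n}) : Prop :=
  forall t : assign n, (#|M :&: Dball k t 0%R 10%R| <= k)%N.

Definition Q3 n m k (Phi : cnf n m k) (M : {set assign n}) : Prop :=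
  forall mu s, mu \in M -> s \in Dball k mu 0%R 100%R -> s \notin Tset Phi ->
    (INR (Xcnt Phi (Delta mu s) s) <= INR k * INR (nunsat Phi s) / 10)%R.

Definition quasirandom n m k (Phi : cnf n m k) : Prop :=
  exists M, [/\ is_mist Phi M, Q1 Phi M, Q2 k M & Q3 Phi M].

Definition flip n (s : assign n) (v : 'I_n) : assign n :=
  [ffun x => if x == v then ~~ s x else s x].

(* One-step transition probability of Walksat(Phi, .) from s to s'.
   A satisfying assignment makes the algorithm halt; we model halting by
   keeping the assignment fixed from then on. *)
Definition trans n m k (Phi : cnf n m k) (s s' : assign n) : R :=
  if nunsat Phi s == 0%N then (if s' == s then 1%R else 0%R)
  else (INR #|[set ij : 'I_m * 'I_k |
                (ij.1 \in unsat Phi s) && (flip s (Phi ij.1 ij.2).1 == s')]|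
        / (INR (nunsat Phi s) * INR k))%R.

Definition omega (n k : nat) : nat := cei (exp (INR n / (INR k * INR k))).

Notation run n w := {ffun 'I_w.+1 -> assign n}.

Definition traj n w (p : run n w) (t : nat) : assign n := p (inord t).

Definition weight n m k w (Phi : cnf n m k) (p : run n w) : R :=
  (/ pow 2 n * \big[Rmult/1%R]_(i < w) trans Phi (traj p i) (traj p i.+1))%R.

Definition Prob n m k w (Phi : cnf n m k) (E : pred (run n w)) : R :=
  \big[Rplus/0%R]_(p | E p) weight Phi p.

Definition Hev n m k w (Phi : cnf n m k) (mu : assign n) (t1 t2 : nat)
  (p : run n w) : bool :=
  [&& hdist (traj p t1) mu == flo (10 * kappa k * INR n),
      hdist (traj p t2) mu == flo (5 * kappa k * INR n) &
      [forall t : 'I_w.+1, ((t1 <= t)%N && (t <= t2)%N) ==>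
         (traj p t \in Dball k mu 5%R 10%R :\: Tset Phi)]].

Definition Aev n w k (M : {set assign n}) (p : run n w) : bool :=
  traj p 0 \notin DPM k M.

(* Main.v *)
Require Import Defs.
From HB Require Import structures.
From mathcomp Require Import all_boot.
From Stdlib Require Import Reals Lra.
Set Implicit Arguments. Unset Strict Implicit.

HB.instance Definition _ := Monoid.isComLaw.Build R 0%R Rplus
  (fun x y z => esym (Rplus_assoc x y z)) Rplus_comm Rplus_0_l.
HB.instance Definition _ := Monoid.isComLaw.Build R 1%R Rmult
  (fun x y z => esym (Rmult_assoc x y z)) Rmult_comm Rmult_1_l.
HB.instance Definition _ := Monoid.isMulLaw.Build R 0%R Rmult Rmult_0_l Rmult_0_r.
HB.instance Definition _ := Monoid.isAddLaw.Build R Rmult Rplus Rmult_plus_distr_r Rmult_plus_distr_l.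

Section Markov.
Variables (A : finType) (T : A -> A -> R) (pi : R).

Definition Wt w (p : {ffun 'I_w.+1 -> A}) : R :=
  (pi * \big[Rmult/1%R]_(i < w) T (p (inord i)) (p (inord i.+1)))%R.

Fixpoint alpha (G : nat -> pred A) (i : nat) (s : A) : R :=
  match i with
  | 0 => if G 0 s then pi else 0%R
  | i'.+1 => if G i'.+1 s then \big[Rplus/0%R]_x (alpha G i' x * T x s)%R else 0%R
  end.

Definition ext w (q : {ffun 'I_w.+1 -> A}) (s : A) : {ffun 'I_w.+2 -> A} :=
  [ffun i : 'I_w.+2 => if (i < w.+1)%N then q (inord i) else s].

Lemma ext_low w q s j : (j <= w)%N -> @ext w q s (inord j) = q (inord j).
Proof. move=> Hj; rewrite ffunE inordK ?ltnS // ?Hj //; exact: leqW. Qed.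
Lemma ext_max w q s : @ext w q s ord_max = s.
Proof. by rewrite ffunE /= ltnn. Qed.

Lemma fwd (G : nat -> pred A) w (f : A -> R) :
  \big[Rplus/0%R]_(p : {ffun 'I_w.+1 -> A} | [forall i : 'I_w.+1, G i (p i)])
      (Wt p * f (p ord_max))%R
  = \big[Rplus/0%R]_s (alpha G w s * f s)%R.
Proof.
elim: w f => [|w IH] f.
  rewrite (reindex (fun s : A => [ffun _ : 'I_1 => s])); last first.
    exists (fun p : {ffun 'I_1 -> A} => p ord0) => [s _|p _] //=; first by rewrite ffunE.
    by apply/ffunP => i; rewrite ffunE (ord1 i).
  rewrite big_mkcond; apply: eq_bigr => s _ /=.
  have -> : [forall i : 'I_1, G i ([ffun=> s] i)] = G 0 s.
    by apply/forallP/idP => [/(_ ord0)|H i]; rewrite ?ffunE // (ord1 i).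
  rewrite /Wt big_ord0 ffunE; case: (G 0 s); lra.
rewrite (reindex (fun qs : {ffun 'I_w.+1 -> A} * A => ext qs.1 qs.2)); last first.
  exists (fun p : {ffun 'I_w.+2 -> A} => ([ffun i : 'I_w.+1 => p (inord i)], p ord_max)).
    move=> [q s] _ /=; rewrite ext_max; congr pair; apply/ffunP => i.
    rewrite !ffunE inordK; last by rewrite ltnS leqW // -ltnS.
    by rewrite ltn_ord inord_val.
  move=> p _; apply/ffunP => i; rewrite !ffunE /=.
  case: ifP => Hi.
    by congr (p _); apply: val_inj; rewrite /= !inordK // ltnS leqW // -ltnS.
  congr (p _); apply: val_inj => /=; apply/eqP; rewrite eqn_leq.
  by have := ltn_ord i; rewrite ltnS => ->; rewrite andbT ltnNge -ltnS Hi.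
have HW : forall (q : {ffun 'I_w.+1 -> A}) (s : A), Wt (ext q s) = (Wt q * T (q ord_max) s)%R.
  move=> q s; rewrite /Wt big_ord_recr /=.
  have E1 : ext q s (inord w) = q ord_max.
    rewrite ext_low //; congr (q _); apply: val_inj; by rewrite /= inordK.
  have E2 : ext q s (inord w.+1) = s.
    rewrite (_ : inord w.+1 = ord_max) ?ext_max //; apply: val_inj; by rewrite /= inordK.
  rewrite E1 E2 Rmult_assoc; congr (_ * _)%R; congr (_ * _)%R.
  apply: eq_bigr => i _; have Hi := ltn_ord i; rewrite !ext_low // ltnW //.
have HF : forall (q : {ffun 'I_w.+1 -> A}) (s : A), [forall i : 'I_w.+2, G i (ext q s i)] =
            [forall i : 'I_w.+1, G i (q i)] && G w.+1 s.
  move=> q s; apply/forallP/andP => [H|[/forallP H1 H2] i].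
    split; last by have := H ord_max; rewrite ext_max.
    apply/forallP => i; have := H (inord i).
    rewrite ext_low; last by rewrite -ltnS.
    by rewrite inordK ?inord_val //; apply: leqW.
  rewrite ffunE; case: ifP => Hi.
    by have := H1 (inord i); rewrite inordK.
  have -> : nat_of_ord i = w.+1 by apply/eqP; rewrite eqn_leq -ltnS ltn_ord leqNgt Hi.
  done.
rewrite (eq_big (fun qs : {ffun 'I_w.+1 -> A} * A =>
            [forall i : 'I_w.+1, G i (qs.1 i)] && G w.+1 qs.2)
         (fun qs => Wt qs.1 * (T (qs.1 ord_max) qs.2 * f qs.2))%R); last first.
  - by move=> [q s] _ /=; rewrite HW ext_max Rmult_assoc.
  - by move=> [q s] /=; rewrite HF.
rewrite -(pair_big (fun q : {ffun 'I_w.+1 -> A} => [forall i : 'I_w.+1, G i (q i)])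
             (fun s => G w.+1 s) (fun q s => Wt q * (T (q ord_max) s * f s))%R).
pose g := fun x => \big[Rplus/0%R]_(s | G w.+1 s) (T x s * f s)%R.
transitivity (\big[Rplus/0%R]_(q : {ffun 'I_w.+1 -> A} | [forall i : 'I_w.+1, G i (q i)]) (Wt q * g (q ord_max))%R).
  by apply: eq_bigr => q _; rewrite /g big_distrr.
rewrite IH /g /=.
under eq_bigr do rewrite big_distrr.
rewrite exchange_big big_mkcond; apply: eq_bigr => s _.
case: (G w.+1 s); last by rewrite Rmult_0_l.
by rewrite big_distrl; apply: eq_bigr => x _; exact: (esym (Rmult_assoc _ _ _)).
Qed.


Lemma Rsum_le (I : Type) (r : seq I) (P : pred I) (F G : I -> R) :
  (forall i, P i -> (F i <= G i)%R) ->
  (\big[Rplus/0%R]_(i <- r | P i) F i <= \big[Rplus/0%R]_(i <- r | P i) G i)%R.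
Proof. move=> H; apply: (big_ind2 (fun a b => a <= b)%R) => //; [lra|intros; lra]. Qed.

Lemma Rsum_ge0 (I : Type) (r : seq I) (P : pred I) (F : I -> R) :
  (forall i, P i -> (0 <= F i)%R) -> (0 <= \big[Rplus/0%R]_(i <- r | P i) F i)%R.
Proof. move=> H; apply: (big_ind (fun a => 0 <= a)%R) => //; [lra|intros; lra]. Qed.

Hypothesis T_ge0 : forall x y, (0 <= T x y)%R.
Hypothesis pi_ge0 : (0 <= pi)%R.

Lemma alpha_ge0 G i s : (0 <= alpha G i s)%R.
Proof.
elim: i s => [|i IH] s /=; case: (G _ s); try lra.
apply: Rsum_ge0 => x _; apply: Rmult_le_pos => //.
Qed.

Lemma alpha0 G i s : ~~ G i s -> alpha G i s = 0%R.
Proof. by case: i => [|i] /= /negbTE ->. Qed.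

Lemma alpha_mono (G1 G2 : nat -> pred A) i s :
  (forall j x, G1 j x -> G2 j x) -> (alpha G1 i s <= alpha G2 i s)%R.
Proof.
move=> H; elim: i s => [|i IH] s /=.
  case E: (G1 0 s); first by rewrite (H _ _ E); lra.
  case: (G2 0 s) => //; lra.
case E: (G1 i.+1 s).
  rewrite (H _ _ E); apply: Rsum_le => x _; apply: Rmult_le_compat_r => //.
case: (G2 i.+1 s); last lra.
apply: Rsum_ge0 => x _; apply: Rmult_le_pos => //; exact: alpha_ge0.
Qed.

Lemma alpha_super (G : nat -> pred A) i (phi : A -> R) :
  (forall s, 0 <= phi s)%R ->
  (forall x, G i x -> \big[Rplus/0%R]_s (T x s * phi s) <= phi x)%R ->
  (\big[Rplus/0%R]_s (alpha G i.+1 s * phi s) <= \big[Rplus/0%R]_s (alpha G i s * phi s))%R.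
Proof.
move=> Hphi Hloc.
apply: (Rle_trans _ (\big[Rplus/0%R]_s \big[Rplus/0%R]_x (alpha G i x * T x s * phi s))%R).
  apply: Rsum_le => s _ /=; case: (G i.+1 s).
    by rewrite big_distrl; apply: Rle_refl.
  rewrite Rmult_0_l; apply: Rsum_ge0 => x _; apply: Rmult_le_pos => //.
  apply: Rmult_le_pos => //; exact: alpha_ge0.
rewrite exchange_big; apply: Rsum_le => x _.
case E: (G i x).
  under eq_bigr do rewrite Rmult_assoc.
  rewrite -big_distrr; apply: Rmult_le_compat_l; [exact: alpha_ge0|exact: Hloc].
rewrite alpha0 ?E //.
under eq_bigr do rewrite !Rmult_0_l.
rewrite big1 //; lra.
Qed.

Lemma alpha_stoch (G : nat -> pred A) i :
  (forall x, \big[Rplus/0%R]_s T x s = 1%R) -> (forall s, G i.+1 s) ->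
  \big[Rplus/0%R]_s alpha G i.+1 s = \big[Rplus/0%R]_s alpha G i s.
Proof.
move=> Hs HG /=.
under eq_bigr do rewrite HG.
rewrite exchange_big; apply: eq_bigr => x _.
by rewrite -big_distrr Hs; exact: Rmult_1_r.
Qed.

Lemma alpha_stoch_le (G : nat -> pred A) i :
  (forall x, \big[Rplus/0%R]_s T x s = 1%R) ->
  (\big[Rplus/0%R]_s alpha G i.+1 s <= \big[Rplus/0%R]_s alpha G i s)%R.
Proof.
move=> Hs.
have H := @alpha_super G i (fun _ => 1%R) (fun _ => Rle_0_1).
have E : forall j, \big[Rplus/0%R]_s (alpha G j s * 1)%R = \big[Rplus/0%R]_s alpha G j s.
  by move=> j; apply: eq_bigr => s _; exact: Rmult_1_r.
rewrite -!E; apply: H => x _.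
have E2 : \big[Rplus/0%R]_s (T x s * 1)%R = \big[Rplus/0%R]_s T x s.
  by apply: eq_bigr => s _; exact: Rmult_1_r.
rewrite E2 Hs; lra.
Qed.


Lemma steps_le (G : nat -> pred A) i j :
  (forall x, \big[Rplus/0%R]_s T x s = 1%R) -> (i <= j)%N ->
  (\big[Rplus/0%R]_s alpha G j s <= \big[Rplus/0%R]_s alpha G i s)%R.
Proof.
move=> Hs /subnKC <-; elim: (j - i)%N => [|d IH]; rewrite ?addn0; first lra.
rewrite addnS; apply: Rle_trans IH; exact: alpha_stoch_le.
Qed.

Lemma steps_eq (G : nat -> pred A) i j :
  (forall x, \big[Rplus/0%R]_s T x s = 1%R) -> (i <= j)%N ->
  (forall t s, (i < t)%N -> G t s) ->
  \big[Rplus/0%R]_s alpha G j s = \big[Rplus/0%R]_s alpha G i s.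
Proof.
move=> Hs /subnKC <- HG; elim: (j - i)%N => [|d IH]; rewrite ?addn0 //.
rewrite addnS alpha_stoch // => s; apply: HG; by rewrite ltnS leq_addr.
Qed.

Lemma steps_super (G : nat -> pred A) (phi : A -> R) i j :
  (forall s, 0 <= phi s)%R -> (i <= j)%N ->
  (forall t x, (i <= t)%N -> (t < j)%N -> G t x ->
     (\big[Rplus/0%R]_s (T x s * phi s) <= phi x)%R) ->
  (\big[Rplus/0%R]_s (alpha G j s * phi s) <= \big[Rplus/0%R]_s (alpha G i s * phi s))%R.
Proof.
move=> Hphi /subnKC <- Hloc; elim: (j - i)%N Hloc => [|d IH] Hloc; rewrite ?addn0; first lra.
rewrite addnS; apply: Rle_trans (IH _); last first.
  by move=> t x H1 H2; apply: Hloc => //; rewrite addnS ltnS ltnW.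
apply: alpha_super => // x; apply: Hloc; by rewrite ?leq_addr // addnS ltnS.
Qed.

End Markov.

Lemma Rsum_const (I : finType) (P : pred I) (c : R) :
  \big[Rplus/0%R]_(i | P i) c = (INR #|P| * c)%R.
Proof. rewrite big_const; elim: #|P| => [|n IH]; [simpl; lra|rewrite iterS IH S_INR; lra]. Qed.

Lemma INR_sum (I : Type) (r : seq I) (P : pred I) (F : I -> nat) :
  INR (\sum_(i <- r | P i) F i) = \big[Rplus/0%R]_(i <- r | P i) INR (F i).
Proof. by apply: (big_morph INR (id1 := 0%R) (op1 := Rplus)) => [x y|]; rewrite ?plus_INR. Qed.

Lemma INR_card (I : finType) (P : pred I) :
  INR #|P| = \big[Rplus/0%R]_i (if P i then 1 else 0)%R.
Proof. by rewrite -big_mkcond Rsum_const Rmult_1_r. Qed.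

Lemma Rinv_ge0 (x : R) : (0 <= x)%R -> (0 <= / x)%R.
Proof.
move=> H; case: (Rle_lt_or_eq_dec _ _ H) => [H1|<-].
  by apply: Rlt_le; apply: Rinv_0_lt_compat.
by rewrite Rinv_0; lra.
Qed.

Section Walk.
Variables (n m k : nat) (Phi : cnf n m k).

Lemma trans_ge0 s s' : (0 <= trans Phi s s')%R.
Proof.
rewrite /trans; case: ifP => _; first by case: ifP => _; lra.
apply: Rmult_le_pos; first exact: pos_INR.
by apply: Rinv_ge0; apply: Rmult_le_pos; apply: pos_INR.
Qed.

Lemma pair_sum (F : 'I_m * 'I_k -> R) (U : {set 'I_m}) :
  \big[Rplus/0%R]_(ij : 'I_m * 'I_k | ij.1 \in U) F ij =
  \big[Rplus/0%R]_(i | i \in U) \big[Rplus/0%R]_j F (i, j).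
Proof.
rewrite (pair_big_dep (fun i => i \in U) (fun _ _ => true) (fun i j => F (i, j))).
by apply: eq_big => [[i j]|[i j] _] //=; rewrite andbT.
Qed.

Lemma trans_sum s (h : assign n -> R) : nunsat Phi s != 0%N ->
  \big[Rplus/0%R]_s' (trans Phi s s' * h s')%R =
  (\big[Rplus/0%R]_(ij : 'I_m * 'I_k | ij.1 \in unsat Phi s)
      h (flip s (Phi ij.1 ij.2).1) / (INR (nunsat Phi s) * INR k))%R.
Proof.
move=> U0; rewrite /trans (negbTE U0).
set N := (INR _ * INR k)%R.
set g := fun ij : 'I_m * 'I_k => flip s (Phi ij.1 ij.2).1.
rewrite (partition_big g xpredT) // /Rdiv big_distrl; apply: eq_bigr => s' _.
rewrite big_distrl.
transitivity (\big[Rplus/0%R]_(ij | (ij.1 \in unsat Phi s) && (g ij == s')) (h s' * / N))%R; last first.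
  by apply: eq_bigr => ij /andP[_ /eqP <-].
rewrite Rsum_const.
rewrite Rmult_assoc [(/ N * _)%R]Rmult_comm; congr (INR _ * _)%R.
by apply: eq_card => ij; rewrite inE unfold_in.
Qed.

Lemma trans_stoch s : (0 < k)%N -> \big[Rplus/0%R]_s' trans Phi s s' = 1%R.
Proof.
move=> k0; case: (eqVneq (nunsat Phi s) 0%N) => U0.
  rewrite /trans U0 eqxx /= (bigD1 s) //= eqxx big1 => [|s' /negbTE ->]; lra.
have := trans_sum (fun _ => 1%R) U0.
have E : forall x : R, (x * 1)%R = x by move=> x; ring.
under eq_bigr do rewrite E.
move=> ->; rewrite pair_sum.
under eq_bigr do rewrite Rsum_const.
rewrite Rsum_const card_ord.
have -> : #|(fun i => i \in unsat Phi s)| = nunsat Phi s by [].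
have : (0 < INR (nunsat Phi s))%R by apply: lt_0_INR; apply/ltP; rewrite lt0n.
have : (0 < INR k)%R by apply: lt_0_INR; apply/ltP.
move=> H1 H2; field; lra.
Qed.


Lemma Delta_sym (s t : assign n) : Defs.Delta s t = Defs.Delta t s.
Proof. by apply/setP => v; rewrite !inE eq_sym. Qed.

Lemma flip_dist (s mu : assign n) v :
  hdist (flip s v) mu = if v \in Defs.Delta s mu then (hdist s mu).-1 else (hdist s mu).+1.
Proof.
rewrite /hdist; case: ifP => Hv.
  rewrite (cardsD1 v (Defs.Delta s mu)) Hv add1n succnK.
  apply: eq_card => x; rewrite !inE ffunE; case: (eqVneq x v) => [->|ne] //=.
  by move: Hv; rewrite inE; case: (s v); case: (mu v).
have := cardsU1 v (Defs.Delta s mu); rewrite Hv add1n => <-.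
apply: eq_card => x; rewrite !inE ffunE; case: (eqVneq x v) => [->|ne] //=.
by move: Hv; rewrite inE; case: (s v); case: (mu v).
Qed.

Lemma local_super (s mu : assign n) : (0 < k)%N -> nunsat Phi s != 0%N ->
  (INR (Xcnt Phi (Defs.Delta mu s) s) <= INR k * INR (nunsat Phi s) / 10)%R ->
  (\big[Rplus/0%R]_s' (trans Phi s s' * (/ 2) ^ (hdist s' mu)) <= (/ 2) ^ (hdist s mu))%R.
Proof.
move=> k0 U0 HX; rewrite trans_sum //.
set d := hdist s mu; set phi := ((/ 2) ^ d)%R.
set Q := fun ij : 'I_m * 'I_k => (Phi ij.1 ij.2).1 \in Defs.Delta s mu.
have Hphi : (0 <= phi)%R by apply: pow_le; lra.
have E1 : forall ij : 'I_m * 'I_k,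
    ((/ 2) ^ hdist (flip s (Phi ij.1 ij.2).1) mu = / 2 * phi + 3 / 2 * phi * (if Q ij then 1 else 0))%R.
  move=> ij; rewrite flip_dist -/d /Q; case: ifP => Hv.
    have Hd : (0 < d)%N by rewrite /d /hdist card_gt0; apply/set0Pn; exists (Phi ij.1 ij.2).1.
    rewrite /phi -(prednK Hd) /=; field.
  by rewrite /phi /=; field.
rewrite (eq_bigr _ (fun ij _ => E1 ij)) big_split /= -!big_distrr /=.
have EN : \big[Rplus/0%R]_(ij : 'I_m * 'I_k | ij.1 \in unsat Phi s) 1%R
          = (INR (nunsat Phi s) * INR k)%R.
  rewrite pair_sum.
  transitivity (\big[Rplus/0%R]_(i | i \in unsat Phi s) INR k).
    apply: eq_bigr => i _; rewrite Rsum_const Rmult_1_r.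
    by congr INR; rewrite -[RHS](card_ord k); apply: eq_card.
  by rewrite Rsum_const; congr (INR _ * _)%R; apply: eq_card.
have EX : \big[Rplus/0%R]_(ij : 'I_m * 'I_k | ij.1 \in unsat Phi s) (if Q ij then 1 else 0)%R
          = INR (Xcnt Phi (Defs.Delta mu s) s).
  rewrite pair_sum /Xcnt INR_sum; apply: eq_bigr => i _.
  rewrite INR_card; apply: eq_bigr => j _; rewrite /Q Delta_sym; congr (if _ then _ else _).
  by rewrite -[RHS]/(j \in [set j0 | (Phi i j0).1 \in Defs.Delta mu s]) inE.
move: EN; rewrite Rsum_const Rmult_1_r => EN.
rewrite EX Rsum_const EN.
have HU : (0 < INR (nunsat Phi s))%R by apply: lt_0_INR; apply/ltP; rewrite lt0n.
have Hk : (0 < INR k)%R by apply: lt_0_INR; apply/ltP.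
have HN : (0 < INR (nunsat Phi s) * INR k)%R by apply: Rmult_lt_0_compat.
apply: (Rmult_le_reg_r (INR (nunsat Phi s) * INR k)) => //.
rewrite /Rdiv Rmult_assoc Rinv_l; last lra.
move: HX; set X := INR (Xcnt _ _ _); set U := INR (nunsat _ s) => HX.
have HX0 : (0 <= X)%R by apply: pos_INR.
nra.
Qed.

End Walk.

From Stdlib Require Lia ZArith.
Module Aux.
Import Lia ZArith.

Lemma flo_mono r1 r2 : (r1 <= r2)%R -> leq (flo r1) (flo r2).
Proof.
move=> H; rewrite /flo; apply/leP.
have [A1 B1] := base_Int_part r1; have [A2 B2] := base_Int_part r2.
have : (IZR (Int_part r1) < IZR (Int_part r2 + 1))%R by rewrite plus_IZR; lra.
move/lt_IZR => H3; lia.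
Qed.

Lemma flo_bounds r : (0 <= r)%R -> (r - 1 < INR (flo r) <= r)%R.
Proof.
move=> H; have [A1 B1] := base_Int_part r.
have H0 : (0 <= Int_part r)%Z.
  have : (-1 < IZR (Int_part r))%R by lra.
  change (-1)%R with (IZR (-1)); move/lt_IZR; lia.
rewrite /flo INR_IZR_INZ Z2Nat.id //; lra.
Qed.

End Aux.
Import Aux.

Lemma exp_le_mono x y : (x <= y)%R -> (exp x <= exp y)%R.
Proof. move=> H; case: (Rle_lt_or_eq_dec _ _ H) => [H1|->]; [left; exact: exp_increasing|lra]. Qed.

Lemma half_pow_exp D : ((/ 2) ^ D = exp (- (INR D * ln 2)))%R.
Proof. by rewrite pow_inv -Rpower_pow; [rewrite exp_Ropp|lra]. Qed.

Lemma kappa_big k n : (4 <= k)%N -> (k <= n)%N -> (1 <= kappa k * INR n)%R.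
Proof.
move=> Hk Hn.
have K4 : (4 <= INR k)%R by apply: (Rle_trans _ (INR 4)); [simpl; lra|apply: le_INR; apply/leP].
have KN : (INR k <= INR n)%R by apply: le_INR; apply/leP.
have L4 : (1 < ln 4)%R.
  have -> : (4 = 2 * 2)%R by lra.
  rewrite ln_mult; try lra; have := ln_lt_2; lra.
have Lk : (ln 4 <= ln (INR k))%R.
  case: (Rle_lt_or_eq_dec _ _ K4) => [H|<-]; [left; apply: ln_increasing; lra|lra].
rewrite /kappa /Rdiv Rmult_assoc.
have : (1 <= / INR k * INR n)%R.
  rewrite -(Rinv_l (INR k)); last lra.
  apply: Rmult_le_compat_l; [left; apply: Rinv_0_lt_compat; lra | lra].
nra.
Qed.

Lemma notT_unsat n m k (Phi : cnf n m k) s : (0 < n)%N -> s \notin Tset Phi -> nunsat Phi s != 0%N.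
Proof.
move=> n0; rewrite inE; case: Rle_dec => // H _; apply/eqP => E; apply: H.
rewrite E /=; rewrite /rho.
have Hn : (0 < INR n)%R by apply: lt_0_INR; apply/ltP.
have H2 : (0 < 2 ^ k)%R by apply: pow_lt; lra.
have : (0 <= INR m)%R by apply: pos_INR.
move=> Hm.
have : (0 <= INR m / (2 ^ k * INR n))%R.
  apply: Rmult_le_pos => //; left; apply: Rinv_0_lt_compat; nra.
move=> HH; have := Rmult_le_pos _ _ (Rlt_le _ _ Hn) HH; lra.
Qed.

Theorem mainTheorem6 :
  exists k0 : nat, forall k : nat, (k0 <= k)%N ->
  exists n0 : nat, forall n : nat, (n0 <= n)%N ->
  forall (m : nat) (Phi : cnf n m k) (M : {set assign n}),
    quasirandom Phi ->
    is_mist Phi M -> Q1 Phi M -> Q2 k M -> Q3 Phi M ->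
  forall (tau1 mu : assign n),
    tau1 \notin Tset Phi -> mu \in M ->
    hdist tau1 mu = flo (10 * kappa k * INR n) ->
  forall t1 t2 : nat, (1 <= t1)%N -> (t1 <= t2)%N -> (t2 <= omega n k)%N ->
    (Prob Phi (fun p : run n (omega n k) =>
        [&& Hev Phi mu t1 t2 p, Aev k M p & traj p t1 == tau1])
     <= exp (- (kappa k * INR n / 2)) *
        Prob Phi (fun p : run n (omega n k) => Aev k M p && (traj p t1 == tau1)))%R.
Proof.
exists 4%N => k Hk; exists k => n Hn m Phi M _ _ _ _ HQ3 tau1 mu _ Hmu _ t1 t2 _ Ht12 Ht2.
set w := omega n k.
set L := flo (10 * kappa k * INR n).
set l := flo (5 * kappa k * INR n).
set B := Dball k mu 5%R 10%R :\: Tset Phi.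
have k0 : (0 < k)%N by apply: leq_trans Hk.
have n0 : (0 < n)%N by apply: leq_trans Hn.
have Hkn := kappa_big Hk Hn.
pose GR := fun (i : nat) (s : assign n) =>
  ((i == 0%N) ==> (s \notin DPM k M)) && ((i == t1) ==> (s == tau1)).
pose GH := fun (i : nat) (s : assign n) =>
  [&& (i == t1) ==> (hdist s mu == L), (i == t2) ==> (hdist s mu == l)
    & ((t1 <= i) && (i <= t2)) ==> (s \in B)].
pose GL := fun i s => GR i s && GH i s.
pose a := alpha (trans Phi) (/ pow 2 n).
have Ht1w : (t1 <= w)%N by apply: leq_trans Ht2.
have trajE : forall (p : run n w) (i : 'I_w.+1), traj p i = p i.
  by move=> p i; rewrite /traj inord_val.
have PR : forall (G : nat -> pred (assign n)) (E : pred (run n w)),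
    (forall p, E p = [forall i : 'I_w.+1, G i (p i)]) ->
    Prob Phi E = \big[Rplus/0%R]_s a G w s.
  move=> G E HE.
  have H := fwd (trans Phi) (/ pow 2 n) G w (fun _ => 1%R).
  have E1 : forall x : R, (x * 1 = x)%R by move=> x; ring.
  rewrite (eq_bigr _ (fun p _ => E1 _)) in H.
  rewrite (eq_bigr _ (fun s _ => E1 _)) in H.
  rewrite /a -H /Prob; apply: eq_bigl => p; exact: HE.
have HR : forall p : run n w,
    (Aev k M p && (traj p t1 == tau1)) = [forall i : 'I_w.+1, GR i (p i)].
  move=> p; apply/andP/forallP => [[HA HT] i|H].
    apply/andP; split; apply/implyP => /eqP Ei.
      by move: HA; rewrite /Aev -Ei trajE.
    by move: HT; rewrite -Ei trajE.
  split.
    by case/andP: (H (inord 0)) => /implyP; rewrite inordK // eqxx => /(_ isT).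
  by case/andP: (H (inord t1)) => _ /implyP; rewrite inordK // eqxx => /(_ isT).
have HL : forall p : run n w,
    [&& Hev Phi mu t1 t2 p, Aev k M p & traj p t1 == tau1] =
    [forall i : 'I_w.+1, GL i (p i)].
  have HH : forall p : run n w, Hev Phi mu t1 t2 p = [forall i : 'I_w.+1, GH i (p i)].
    move=> p; apply/and3P/forallP => [[h1 h2 /forallP h3] i|H].
      apply/and3P; split; apply/implyP.
      - by move=> /eqP Ei; move: h1; rewrite -Ei trajE.
      - by move=> /eqP Ei; move: h2; rewrite -Ei trajE.
      - by move=> Hi; move/implyP: (h3 i); rewrite trajE; apply.
    split.
    - by case/and3P: (H (inord t1)) => /implyP; rewrite inordK // eqxx => /(_ isT).
    - by case/and3P: (H (inord t2)) => _ /implyP; rewrite inordK // eqxx => /(_ isT).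
    - apply/forallP => i; apply/implyP => Hi.
      by case/and3P: (H i) => _ _ /implyP /(_ Hi); rewrite trajE.
  move=> p; rewrite HH; apply/and3P/forallP => [[/forallP h1 h2 h3] i | H].
    apply/andP; split; last exact: h1.
    by have := HR p; rewrite h2 h3 => /esym/forallP; apply.
  have : Aev k M p && (traj p t1 == tau1).
    by rewrite HR; apply/forallP => i; case/andP: (H i).
  case/andP => -> ->; split => //.
  by apply/forallP => i; case/andP: (H i).
rewrite (PR _ _ HL) (PR _ _ HR).
have Tge0 := @trans_ge0 n m k Phi.
have pige0 : (0 <= / 2 ^ n)%R by apply: Rinv_ge0; apply: pow_le; lra.
have Hs : forall x, \big[Rplus/0%R]_s trans Phi x s = 1%R by move=> x; exact: trans_stoch.
pose phi := fun s : assign n => ((/ 2) ^ (hdist s mu))%R.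
have phi0 : forall s, (0 <= phi s)%R by move=> s; apply: pow_le; lra.
have Hkn0 : (0 <= kappa k * INR n)%R by lra.
have fl1 : (l <= L)%N by apply: flo_mono; lra.
have S1 : (\big[Rplus/0%R]_s a GL w s <= \big[Rplus/0%R]_s a GL t2 s)%R.
  exact: steps_le.
have Hy : forall j, (2 ^ j * (/ 2) ^ j = 1)%R.
  by move=> j; rewrite -Rpow_mult_distr Rinv_r ?pow1 //; lra.
have S2 : \big[Rplus/0%R]_s a GL t2 s = (2 ^ l * \big[Rplus/0%R]_s (a GL t2 s * phi s))%R.
  rewrite (_ : (2 ^ l * \big[Rplus/0%R]_s (a GL t2 s * phi s))%R
              = \big[Rplus/0%R]_s (2 ^ l * (a GL t2 s * phi s))%R); last by rewrite big_distrr.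
  apply: eq_bigr => s _.
  case E: (GL t2 s).
    case/andP: E => _ /and3P [_ /implyP /(_ (eqxx t2)) /eqP Hd _].
    rewrite /phi Hd; transitivity (a GL t2 s * (2 ^ l * (/ 2) ^ l))%R; [rewrite Hy|]; ring.
  rewrite /a alpha0 ?E //; ring.
have S3 : (\big[Rplus/0%R]_s (a GL t2 s * phi s) <= \big[Rplus/0%R]_s (a GL t1 s * phi s))%R.
  apply: steps_super => // t x Htx Htx2 Hx.
  case/andP: Hx => _ /and3P [_ _ /implyP HB].
  have : x \in B by apply: HB; rewrite Htx ltnW.
  rewrite inE => /andP [HnT HD].
  apply: local_super => //; first exact: notT_unsat.
  apply: HQ3 => //.
  move: HD; rewrite !inE => /andP [h1 h2]; apply/andP; split.
    by apply: leq_trans h1; apply: flo_mono; lra.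
  by apply: leq_trans h2 _; apply: flo_mono; lra.
have S4 : (\big[Rplus/0%R]_s (a GL t1 s * phi s) <= (/ 2) ^ L * \big[Rplus/0%R]_s a GR t1 s)%R.
  rewrite (_ : ((/ 2) ^ L * \big[Rplus/0%R]_s a GR t1 s)%R
              = \big[Rplus/0%R]_s ((/ 2) ^ L * a GR t1 s)%R); last by rewrite big_distrr.
  apply: Rsum_le => s _.
  case E: (GL t1 s).
    case/andP: E => _ /and3P [/implyP /(_ (eqxx t1)) /eqP Hd _ _].
    rewrite /phi Hd Rmult_comm; apply: Rmult_le_compat_l; first by apply: pow_le; lra.
    by apply: alpha_mono => // j x /andP [].
  rewrite /a alpha0 ?E // Rmult_0_l; apply: Rmult_le_pos; first by apply: pow_le; lra.
  exact: alpha_ge0.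
have S5 : \big[Rplus/0%R]_s a GR w s = \big[Rplus/0%R]_s a GR t1 s.
  apply: steps_eq => // t s' Ht.
  by rewrite /GR (gtn_eqF (leq_ltn_trans (leq0n t1) Ht)) (gtn_eqF Ht).
have C : (2 ^ l * (/ 2) ^ L <= exp (- (kappa k * INR n / 2)))%R.
  have -> : ((/ 2) ^ L = (/ 2) ^ l * (/ 2) ^ (L - l))%R.
    by rewrite -pow_add; congr pow; symmetry; exact: (subnKC fl1).
  rewrite -Rmult_assoc Hy Rmult_1_l half_pow_exp; apply: exp_le_mono.
  rewrite minus_INR; last by apply/leP.
  have [B1 _] := flo_bounds (r := (10 * kappa k * INR n)%R) ltac:(lra).
  have [_ B2] := flo_bounds (r := (5 * kappa k * INR n)%R) ltac:(lra).
  have := ln_lt_2.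
  rewrite -/L -/l in B1 B2 => Hln.
  have B1' : (10 * (kappa k * INR n) - 1 < INR L)%R by lra.
  have B2' : (INR l <= 5 * (kappa k * INR n))%R by lra.
  move: B1' B2' Hkn; set x := (kappa k * INR n)%R => B1' B2' Hx.
  have HD : (0 <= INR L - INR l)%R by lra.
  have := Rmult_le_pos _ _ HD (Rlt_le 0 (ln 2 - / 2) ltac:(lra)).
  lra.
have P0 : (0 <= \big[Rplus/0%R]_s a GR t1 s)%R.
  by apply: Rsum_ge0 => s _; apply: alpha_ge0.
have H2l : (0 <= 2 ^ l)%R by apply: pow_le; lra.
rewrite S5; apply: (Rle_trans _ _ _ S1); rewrite S2.
apply: (Rle_trans _ (2 ^ l * ((/ 2) ^ L * \big[Rplus/0%R]_s a GR t1 s)))%R.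
  apply: Rmult_le_compat_l => //; exact: Rle_trans S3 S4.
by rewrite -Rmult_assoc; apply: Rmult_le_compat_r.
Qed.
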